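(* Consider ballistic deposition started from the empty configuration. There exists a constant $A>0$ such that, with probability at least $1-\varepsilon_N$ where $\sum_N\varepsilon_N<\infty$ (in the paper's words: almost surely, for all $N$ large enough), $$\max_{i\in G_N}\sigma_i(N)\le A\log N .$$
   Context: Deposition models. Fix an integer $N\ge2$ and let $G_N=\{1,\dots,N\}$. A configuration is $\sigma=(\sigma_1,\dots,\sigma_N)\in\mathbb N^N$, $\sigma_i$ being the height of column (pile) $i$; the cluster is $\bigcup_i\{i\}\times\{0,\dots,\sigma_i\}$. Given the current configuration $\sigma$, an explorer is a walk $S_n=(X_n,Z_n)$, $n\ge0$, with $(X_n)$ i.i.d. uniform on $G_N$, $Z_0=\max_i\sigma_i+1$, and for ballistic deposition $Z_{n+1}-Z_n=-1$ for all $n$ (for diffusive deposition the increments are instead i.i.d. uniform on $\{-1,+1\}$). Let $n^*=\inf\{n\ge0:Z_n\le\sigma_{X_n}\}$ and $X^*=X_{n^*}$; the explorer attaches to column $X^*$, i.e. the new configuration is $\sigma+e_{X^*}$. Explorers are sent one at a time, independently, and $\sigma(t)$ denotes the configuration after $t$ explorers, with $\sigma(0)=(0,\dots,0)$. *)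

(* Defs.v *)
From Stdlib Require Import Reals Arith List.
Import ListNotations.
Open Scope R_scope.

(* Columns are indexed 0, ..., N-1 (standing for G_N = {1,...,N}).
   A configuration is a function sigma : nat -> nat; only its values
   on 0..N-1 matter. *)
Definition config := nat -> nat.

Definition col_sum (N : nat) (f : nat -> R) : R :=
  fold_right (fun i acc => f i + acc) 0 (seq 0 N).

Definition maxh (N : nat) (s : config) : nat :=
  fold_right (fun i m => Nat.max (s i) m) 0%nat (seq 0 N).

Definition add_col (s : config) (j : nat) : config :=
  fun i => if Nat.eqb i j then S (s i) else s i.

(* Ballistic deposition: probability that an explorer whose current
   height is z (before drawing its next uniform column X) attaches to
   column j, given configuration s.  It draws X uniform on the columns;
   if z <= s X it attaches to X, otherwise its height becomes z-1.
   (At z = 0 it always attaches, since s X >= 0.) *)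
Fixpoint attach (N : nat) (s : config) (z : nat) (j : nat) : R :=
  col_sum N (fun x => / INR N *
    (if Nat.leb z (s x) then (if Nat.eqb x j then 1 else 0)
     else match z with
          | O => 0
          | S z' => attach N s z' j
          end)).

Definition kernel (N : nat) (s : config) (j : nat) : R :=
  attach N s (S (maxh N s)) j.

(* Expectation of f(sigma(t)) when t explorers are sent one at a time
   from configuration s. *)
Fixpoint evolve (N : nat) (t : nat) (f : config -> R) (s : config) : R :=
  match t with
  | O => f s
  | S t' => col_sum N (fun j => kernel N s j * evolve N t' f (add_col s j))
  end.

Definition empty_config : config := fun _ => 0%nat.

Definition prob_max_le (N t : nat) (b : R) : R :=
  evolve N t (fun s => if Rle_dec (INR (maxh N s)) b then 1 else 0)
    empty_config.

(* Main.v *)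
Require Import Defs.
From Stdlib Require Import Reals Arith List Lra Lia.
Open Scope R_scope.

Lemma Rdiv_le_0_compat : forall a b, 0 <= a -> 0 < b -> 0 <= a / b.
Proof. intros a b Ha Hb. unfold Rdiv. apply Rmult_le_pos; auto. left; apply Rinv_0_lt_compat; auto. Qed.

Definition lsum (l : list nat) (f : nat -> R) : R :=
  fold_right (fun i acc => f i + acc) 0 l.

Lemma col_sum_lsum N f : col_sum N f = lsum (seq 0 N) f.
Proof. reflexivity. Qed.

Lemma lsum_le l f g : (forall i, In i l -> f i <= g i) -> lsum l f <= lsum l g.
Proof.
  induction l as [|a l IH]; simpl; intros H; [lra|].
  assert (f a <= g a) by (apply H; auto).
  assert (lsum l f <= lsum l g) by (apply IH; intros; apply H; auto). lra.
Qed.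

Lemma lsum_ext l f g : (forall i, In i l -> f i = g i) -> lsum l f = lsum l g.
Proof.
  induction l as [|a l IH]; simpl; intros H; [lra|].
  rewrite H by auto. rewrite IH by (intros; apply H; auto). reflexivity.
Qed.

Lemma lsum_plus l f g : lsum l (fun i => f i + g i) = lsum l f + lsum l g.
Proof. induction l; simpl; [lra|]. rewrite IHl. ring. Qed.

Lemma lsum_scal l c f : lsum l (fun i => c * f i) = c * lsum l f.
Proof. induction l; simpl; [ring|]. rewrite IHl. ring. Qed.

Lemma lsum_const l c : lsum l (fun _ => c) = INR (length l) * c.
Proof. induction l; simpl length; [simpl; ring|]. simpl lsum. rewrite IHl, S_INR. ring. Qed.

Lemma lsum_nonneg l f : (forall i, In i l -> 0 <= f i) -> 0 <= lsum l f.
Proof.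
  intros H. replace 0 with (lsum l (fun _ => 0)).
  apply lsum_le; auto. rewrite lsum_const; ring.
Qed.

Lemma lsum_swap l1 l2 (F : nat -> nat -> R) :
  lsum l1 (fun j => lsum l2 (fun x => F x j)) = lsum l2 (fun x => lsum l1 (fun j => F x j)).
Proof.
  induction l1 as [|a l1 IH]; simpl.
  - replace (lsum l2 (fun _ => 0)) with 0; [reflexivity|]. rewrite lsum_const; ring.
  - rewrite IH. rewrite <- lsum_plus. reflexivity.
Qed.

Lemma lsum_ind_out a n j h : (j < a)%nat ->
  lsum (seq a n) (fun x => if Nat.eqb x j then h x else 0) = 0.
Proof.
  intros Hj. rewrite (lsum_ext _ _ (fun _ => 0)). rewrite lsum_const; ring.
  intros i Hi. apply in_seq in Hi. destruct (Nat.eqb_spec i j); [lia|reflexivity].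
Qed.

Lemma lsum_ind_in n a j h : (a <= j < a + n)%nat ->
  lsum (seq a n) (fun x => if Nat.eqb x j then h x else 0) = h j.
Proof.
  revert a; induction n as [|n IH]; intros a Hj; [lia|].
  simpl seq. simpl lsum. destruct (Nat.eqb_spec a j).
  - subst. rewrite lsum_ind_out by lia. ring.
  - rewrite IH by lia. ring.
Qed.

Lemma lsum_ind_le N j h : 0 <= h j ->
  lsum (seq 0 N) (fun x => if Nat.eqb x j then h x else 0) <= h j.
Proof.
  intros H. destruct (Nat.lt_ge_cases j N).
  - rewrite lsum_ind_in by lia. lra.
  - rewrite (lsum_ext _ _ (fun _ => 0)). rewrite lsum_const; lra.
    intros i Hi. apply in_seq in Hi. destruct (Nat.eqb_spec i j); [lia|reflexivity].
Qed.

Lemma attach_eq N s z j : attach N s z j = col_sum N (fun x => / INR N *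
    (if Nat.leb z (s x) then (if Nat.eqb x j then 1 else 0)
     else match z with
          | O => 0
          | S z' => attach N s z' j
          end)).
Proof. destruct z; reflexivity. Qed.

Lemma attach_nonneg N s z j : (0 < N)%nat -> 0 <= attach N s z j.
Proof.
  intros HN. assert (0 < INR N) by (apply lt_0_INR; lia).
  assert (0 < / INR N) by (apply Rinv_0_lt_compat; lra).
  induction z; rewrite attach_eq, col_sum_lsum; apply lsum_nonneg; intros i _.
  - destruct (Nat.leb 0 (s i)); destruct (Nat.eqb i j); nra.
  - destruct (Nat.leb (S z) (s i)); [destruct (Nat.eqb i j)|]; nra.
Qed.

Lemma attach_sum N s z : (0 < N)%nat ->
  lsum (seq 0 N) (fun j => attach N s z j) = 1.
Proof.
  intros HN. assert (0 < INR N) by (apply lt_0_INR; lia).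
  induction z.
  - rewrite (lsum_ext _ _ (fun j => lsum (seq 0 N) (fun x => / INR N * (if Nat.eqb x j then 1 else 0)))).
    2:{ intros j _. rewrite attach_eq, col_sum_lsum. apply lsum_ext. intros x _. reflexivity. }
    rewrite lsum_swap.
    rewrite (lsum_ext _ _ (fun _ => / INR N)).
    { rewrite lsum_const, length_seq. field. lra. }
    intros x Hx. apply in_seq in Hx. rewrite lsum_scal.
    rewrite (lsum_ext _ _ (fun j => if Nat.eqb j x then 1 else 0)).
    rewrite lsum_ind_in by lia. ring.
    intros j _. rewrite Nat.eqb_sym. reflexivity.
  - rewrite (lsum_ext _ _ (fun j => lsum (seq 0 N) (fun x => / INR N *
      (if Nat.leb (S z) (s x) then (if Nat.eqb x j then 1 else 0) else attach N s z j)))).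
    2:{ intros j _. rewrite attach_eq, col_sum_lsum. reflexivity. }
    rewrite lsum_swap.
    rewrite (lsum_ext _ _ (fun _ => / INR N)).
    { rewrite lsum_const, length_seq. field. lra. }
    intros x Hx. apply in_seq in Hx. rewrite lsum_scal.
    destruct (Nat.leb (S z) (s x)).
    + rewrite (lsum_ext _ _ (fun j => if Nat.eqb j x then 1 else 0)).
      rewrite lsum_ind_in by lia. ring.
      intros j _. rewrite Nat.eqb_sym. reflexivity.
    + rewrite IHz. ring.
Qed.

Lemma attach_le N s z j : (0 < N)%nat ->
  attach N s z j <= (INR (Nat.min z (s j)) + 1) / INR N.
Proof.
  intros HN. assert (0 < INR N) by (apply lt_0_INR; lia).
  assert (0 < / INR N) by (apply Rinv_0_lt_compat; lra).
  induction z.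
  - rewrite attach_eq, col_sum_lsum.
    rewrite (lsum_ext _ _ (fun x => if Nat.eqb x j then / INR N else 0)).
    + eapply Rle_trans. apply (lsum_ind_le N j (fun _ => / INR N)). lra.
      simpl. unfold Rdiv. lra.
    + intros x _. simpl. destruct (Nat.eqb x j); ring.
  - rewrite attach_eq, col_sum_lsum.
    set (ind := if Nat.leb (S z) (s j) then 1 else 0).
    eapply Rle_trans.
    apply (lsum_le _ _ (fun x => (if Nat.eqb x j then / INR N * ind else 0) + / INR N * attach N s z j)).
    { intros x _. pose proof (attach_nonneg N s z j HN).
      destruct (Nat.eqb_spec x j).
      - subst x. unfold ind. destruct (Nat.leb (S z) (s j)); nra.
      - destruct (Nat.leb (S z) (s x)); nra. }
    rewrite lsum_plus, lsum_const, length_seq.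
    eapply Rle_trans. apply Rplus_le_compat_r. apply (lsum_ind_le N j (fun _ => / INR N * ind)).
    unfold ind; destruct (Nat.leb (S z) (s j)); lra.
    replace (INR N * (/ INR N * attach N s z j)) with (attach N s z j) by (field; lra).
    eapply Rle_trans. apply Rplus_le_compat_l. apply IHz.
    unfold ind. destruct (Nat.leb_spec (S z) (s j)).
    + rewrite Nat.min_l by lia. rewrite Nat.min_l by lia. rewrite S_INR. unfold Rdiv. lra.
    + rewrite Nat.min_r by lia. rewrite Nat.min_r by lia. unfold Rdiv. lra.
Qed.

Lemma kernel_nonneg N s j : (0 < N)%nat -> 0 <= kernel N s j.
Proof. apply attach_nonneg. Qed.

Lemma kernel_sum N s : (0 < N)%nat -> lsum (seq 0 N) (fun j => kernel N s j) = 1.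
Proof. apply attach_sum. Qed.

Lemma kernel_le N s j : (0 < N)%nat -> kernel N s j <= (INR (s j) + 1) / INR N.
Proof.
  intros HN. assert (0 < INR N) by (apply lt_0_INR; lia).
  eapply Rle_trans. apply attach_le; auto.
  unfold Rdiv. apply Rmult_le_compat_r. left; apply Rinv_0_lt_compat; lra.
  apply Rplus_le_compat_r. apply le_INR. lia.
Qed.

Fixpoint alpha (N r : nat) : R :=
  match r with
  | O => 11/10
  | S r' => alpha N r' * (1 + (alpha N r' - 1) / INR N)
  end.

Definition G N r (s : config) : R := col_sum N (fun x => alpha N r ^ (s x + 1)).

Lemma alpha_ge1 N r : (0 < N)%nat -> 1 <= alpha N r.
Proof.
  intros HN. assert (0 < INR N) by (apply lt_0_INR; lia).
  induction r; simpl; [lra|].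
  assert (0 <= (alpha N r - 1) / INR N) by (apply Rdiv_le_0_compat; lra). nra.
Qed.

Lemma bernoulli x k : 0 <= x -> 1 + INR k * x <= (1 + x) ^ k.
Proof.
  intros Hx. induction k; [simpl; lra|].
  rewrite S_INR. simpl pow.
  assert (0 <= INR k) by apply pos_INR. nra.
Qed.

Lemma G_nonneg N r s : (0 < N)%nat -> 0 <= G N r s.
Proof.
  intros HN. unfold G. rewrite col_sum_lsum. apply lsum_nonneg. intros.
  apply pow_le. pose proof (alpha_ge1 N r HN). lra.
Qed.

Lemma G_add N r s j : (j < N)%nat ->
  G N r (add_col s j) = G N r s + alpha N r ^ (s j + 1) * (alpha N r - 1).
Proof.
  intros Hj. unfold G. rewrite !col_sum_lsum.
  rewrite (lsum_ext _ _ (fun x => alpha N r ^ (s x + 1) +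
     (if Nat.eqb x j then alpha N r ^ (s x + 1) * (alpha N r - 1) else 0))).
  - rewrite lsum_plus. rewrite lsum_ind_in by lia. reflexivity.
  - intros x _. unfold add_col. destruct (Nat.eqb_spec x j).
    + replace (S (s x) + 1)%nat with (S (s x + 1)) by lia. simpl. ring.
    + ring.
Qed.

Lemma step_bound N r s : (0 < N)%nat ->
  lsum (seq 0 N) (fun j => kernel N s j * G N r (add_col s j)) <= G N (S r) s.
Proof.
  intros HN. assert (0 < INR N) by (apply lt_0_INR; lia).
  pose proof (alpha_ge1 N r HN) as Ha.
  set (a := alpha N r) in *.
  rewrite (lsum_ext _ _ (fun j => kernel N s j * G N r s + kernel N s j * (a ^ (s j + 1) * (a - 1)))).
  2:{ intros j Hj. apply in_seq in Hj. rewrite G_add by lia. fold a. ring. }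
  rewrite lsum_plus.
  rewrite (lsum_ext _ _ (fun j => G N r s * kernel N s j)) by (intros; ring).
  rewrite lsum_scal, kernel_sum by auto.
  eapply Rle_trans. apply Rplus_le_compat_l.
  apply (lsum_le _ _ (fun j => (INR (s j) + 1) / INR N * (a ^ (s j + 1) * (a - 1)))).
  { intros j _. apply Rmult_le_compat_r. apply Rmult_le_pos. apply pow_le; lra. lra.
    apply kernel_le; auto. }
  unfold G at 1. rewrite col_sum_lsum, Rmult_1_r, <- lsum_plus.
  unfold G. rewrite col_sum_lsum. apply lsum_le. intros j _.
  simpl alpha. fold a. rewrite Rpow_mult_distr.
  pose proof (bernoulli ((a - 1) / INR N) (s j + 1)) as B.
  assert (0 <= (a - 1) / INR N) by (apply Rdiv_le_0_compat; lra).
  specialize (B H0). rewrite plus_INR in B. simpl INR in B.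
  assert (0 <= a ^ (s j + 1)) by (apply pow_le; lra).
  assert ((INR (s j) + 1) / INR N * (a ^ (s j + 1) * (a - 1)) =
          a ^ (s j + 1) * ((INR (s j) + 1) * ((a - 1) / INR N))) by (field; lra).
  rewrite H2. nra.
Qed.

Lemma main_ind N f c : (0 < N)%nat -> 0 <= c ->
  (forall s, 1 - c * G N 0 s <= f s) ->
  forall r s, 1 - c * G N r s <= evolve N r f s.
Proof.
  intros HN Hc Hf r. induction r; intros s; [apply Hf|].
  simpl evolve. rewrite col_sum_lsum.
  eapply Rle_trans. 2:{ apply lsum_le. intros j _.
    apply Rmult_le_compat_l. apply kernel_nonneg; auto. apply IHr. }
  rewrite (lsum_ext _ _ (fun j => kernel N s j + (- c) * (kernel N s j * G N r (add_col s j))))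
    by (intros; ring).
  rewrite lsum_plus, lsum_scal, kernel_sum by auto.
  pose proof (step_bound N r s HN). nra.
Qed.

Lemma pow_exp x n : exp x ^ n = exp (INR n * x).
Proof.
  induction n; simpl pow. simpl INR. rewrite Rmult_0_l, exp_0. reflexivity.
  rewrite IHn, S_INR, <- exp_plus. f_equal. ring.
Qed.

Lemma alpha_bound N r : (2 <= N)%nat -> (r <= N)%nat ->
  alpha N r - 1 <= (1/10) * (1 + 2 / INR N) ^ r.
Proof.
  intros HN. assert (0 < INR N) by (apply lt_0_INR; lia).
  assert (Hb : (1 + 2 / INR N) ^ N <= 9).
  { eapply Rle_trans. apply pow_incr. split.
    assert (0 <= 2 / INR N) by (apply Rdiv_le_0_compat; lra). lra.
    left. apply exp_ineq1. apply Rgt_not_eq. apply Rdiv_lt_0_compat; lra.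
    rewrite pow_exp. replace (INR N * (2 / INR N)) with (1 + 1) by (field; lra).
    rewrite exp_plus. pose proof exp_le_3. pose proof (exp_pos 1). nra. }
  assert (Hq : 1 <= 1 + 2 / INR N) by (assert (0 <= 2 / INR N) by (apply Rdiv_le_0_compat; lra); lra).
  induction r; intros Hr; simpl alpha.
  - simpl. lra.
  - assert (IH := IHr ltac:(lia)).
    assert (Hpr : (1 + 2 / INR N) ^ r <= 9).
    { eapply Rle_trans. apply Rle_pow. lra. apply (Nat.le_trans _ _ _ (Nat.le_succ_diag_r r) Hr). auto. }
    pose proof (alpha_ge1 N r ltac:(lia)).
    set (a := alpha N r) in *.
    assert (a - 1 <= 1) by lra.
    simpl pow.
    replace (a * (1 + (a - 1) / INR N) - 1) with ((a - 1) * (1 + a / INR N)) by (field; lra).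
    assert (a / INR N <= 2 / INR N) by (unfold Rdiv; apply Rmult_le_compat_r; [left; apply Rinv_0_lt_compat; lra| lra]).
    assert (0 <= a / INR N) by (apply Rdiv_le_0_compat; lra).
    nra.
Qed.

Lemma lsum_ge_term l f i : (forall x, In x l -> 0 <= f x) -> In i l -> f i <= lsum l f.
Proof.
  induction l as [|a l IH]; simpl; intros H Hi; [contradiction|].
  destruct Hi as [->|Hi].
  - assert (0 <= lsum l f) by (apply lsum_nonneg; auto). lra.
  - assert (0 <= f a) by auto. assert (f i <= lsum l f) by (apply IH; auto). lra.
Qed.

Lemma maxh_in l (s : config) : l <> nil ->
  exists i, In i l /\ fold_right (fun i m => Nat.max (s i) m) 0%nat l = s i.
Proof.
  induction l as [|a l IH]; intros H; [congruence|].
  destruct l as [|b l'].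
  - exists a. simpl. split; auto. lia.
  - destruct IH as [i [Hi Ei]]; [discriminate|].
    simpl fold_right in *. rewrite Ei.
    destruct (Nat.le_ge_cases (s a) (s i)).
    + exists i. split. right; auto. lia.
    + exists a. split. left; auto. lia.
Qed.

Lemma partial_sum k :
  sum_f_R0 (fun n => 6 / ((INR n + 1) * (INR n + 2))) k = 6 - 6 / (INR k + 2).
Proof.
  assert (forall n, 0 <= INR n) by apply pos_INR.
  induction k.
  - simpl sum_f_R0. change (INR 0) with 0. field.
  - change (sum_f_R0 (fun n => 6 / ((INR n + 1) * (INR n + 2))) (S k)) with
      (sum_f_R0 (fun n => 6 / ((INR n + 1) * (INR n + 2))) k + 6 / ((INR (S k) + 1) * (INR (S k) + 2))).
    rewrite IHk, S_INR. specialize (H k). field. lra.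
Qed.

Theorem theorem1p2 :
  exists A : R, 0 < A /\
  exists eps : nat -> R,
    (forall N, 0 <= eps N) /\
    (exists l : R, infinite_sum eps l) /\
    (forall N : nat, (2 <= N)%nat ->
       1 - eps N <= prob_max_le N N (A * ln (INR N))).
Proof.
  set (lam := 11/10).
  assert (Hl : 0 < ln lam) by (rewrite <- ln_1; apply ln_increasing; unfold lam; lra).
  exists (3 / ln lam). split. apply Rdiv_lt_0_compat; lra.
  exists (fun n => 6 / ((INR n + 1) * (INR n + 2))).
  split; [|split].
  - intros n. pose proof (pos_INR n). apply Rdiv_le_0_compat; nra.
  - exists 6. intros e He. destruct (archimed_cor1 (e / 6)) as [K [HK HK0]]. lra.
    exists K. intros k Hk. unfold R_dist. rewrite partial_sum.
    assert (HKr : INR K <= INR k) by (apply le_INR; lia).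
    assert (0 < INR K) by (apply lt_0_INR; lia).
    rewrite Rabs_left1.
    2:{ assert (0 < 6 / (INR k + 2)) by (apply Rdiv_lt_0_compat; lra). lra. }
    assert (6 / (INR k + 2) <= 6 / INR K).
    { unfold Rdiv. apply Rmult_le_compat_l. lra. apply Rinv_le_contravar; lra. }
    assert (6 / INR K < e).
    { assert (/ INR K * 6 < e / 6 * 6) by (apply Rmult_lt_compat_r; lra). unfold Rdiv. lra. }
    lra.
  - intros N HN. set (n := INR N).
    assert (Hn : 2 <= n) by (unfold n; replace 2 with (INR 2) by (simpl; ring); apply le_INR; lia).
    assert (HN0 : (0 < N)%nat) by lia.
    set (c := / n ^ 3).
    assert (Hc : 0 < c) by (unfold c; apply Rinv_0_lt_compat; apply pow_lt; lra).
    unfold prob_max_le.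
    eapply Rle_trans.
    2:{ apply (main_ind N _ c HN0 (Rlt_le _ _ Hc)).
        intros s. destruct (Rle_dec (INR (maxh N s)) (3 / ln lam * ln n)) as [Hle|Hgt].
        - pose proof (G_nonneg N 0 s HN0). nra.
        - destruct (maxh_in (seq 0 N) s) as [i [Hi Ei]].
          { destruct N; [lia|discriminate]. }
          fold (maxh N s) in Ei.
          assert (Hg : lam ^ (s i + 1) <= G N 0 s).
          { unfold G. rewrite col_sum_lsum. apply (lsum_ge_term _ (fun x => alpha N 0 ^ (s x + 1))); auto.
            intros; apply pow_le; simpl; lra. }
          assert (Hp : lam ^ (s i) <= lam ^ (s i + 1)) by (apply Rle_pow; [unfold lam; lra|lia]).
          assert (Hm : n ^ 3 <= lam ^ (s i)).
          { rewrite <- (Rpower_pow (s i)) by (unfold lam; lra).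
            rewrite <- (Rpower_pow 3) by lra. unfold Rpower. left. apply exp_increasing.
            rewrite <- Ei in *. apply Rnot_le_lt in Hgt.
            apply (Rmult_lt_compat_r (ln lam)) in Hgt; auto.
            replace (3 / ln lam * ln n * ln lam) with (INR 3 * ln n) in Hgt by (simpl; field; lra).
            exact Hgt. }
          assert (1 <= c * G N 0 s).
          { unfold c. assert (0 < n ^ 3) by (apply pow_lt; lra).
            apply (Rmult_le_reg_l (n ^ 3)); auto. rewrite <- Rmult_assoc, Rinv_r by lra. lra. }
          lra. }
    assert (HG : G N N empty_config <= 2 * n).
    { unfold G. rewrite col_sum_lsum. unfold empty_config. simpl Nat.add.
      rewrite lsum_const, length_seq. fold n. rewrite pow_1.
      pose proof (alpha_bound N N HN (le_n N)). fold n in H.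
      assert ((1 + 2 / n) ^ N <= 9).
      { eapply Rle_trans. apply pow_incr. split.
        assert (0 <= 2 / n) by (apply Rdiv_le_0_compat; lra). lra.
        left. apply exp_ineq1. apply Rgt_not_eq. apply Rdiv_lt_0_compat; lra.
        rewrite pow_exp. fold n. replace (n * (2 / n)) with (1 + 1) by (field; lra).
        rewrite exp_plus. pose proof exp_le_3. pose proof (exp_pos 1). nra. }
      nra. }
    assert (Hcg : c * G N N empty_config <= 2 / n ^ 2).
    { eapply Rle_trans. apply Rmult_le_compat_l. lra. exact HG.
      unfold c. right. field. lra. }
    assert (Heps : 2 / n ^ 2 <= 6 / ((n + 1) * (n + 2))).
    { assert (E : 6 / ((n + 1) * (n + 2)) - 2 / n ^ 2 = (2 * (2 * n + 1) * (n - 2)) / ((n + 1) * (n + 2) * n ^ 2)) by (field; lra).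
      assert (0 <= (2 * (2 * n + 1) * (n - 2)) / ((n + 1) * (n + 2) * n ^ 2)).
      { apply Rdiv_le_0_compat. nra. assert (0 < n ^ 2) by (apply pow_lt; lra).
        apply Rmult_lt_0_compat; nra. }
      lra. }
    fold n. lra.
Qed.
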